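(* Let $e_1,\dots,e_m$ be domains, in each of which a random pair $(X,Y)$ with $X\in\mathbb{R}^d$ is observed, and assume: (i) $Y$ is generated from a linear structural equation model $Y=\beta^\intercal X+N$ with coefficients $\beta\in\mathbb{R}^d$ and noise $N$ with finite second moment; (ii) predictors are linear, $x\mapsto\hat\beta^\intercal x$ with $\hat\beta\in\mathbb{R}^d$; (iii) the loss is squared error, so the risk in domain $e_i$ is $\mathcal{R}^{e_i}(\hat\beta)=\mathbb{E}_{e_i}[(Y-\hat\beta^\intercal X)^2]$; (iv) the risk $\mathbb{E}_{e_i}[(Y-\beta^\intercal X)^2]$ of the causal predictor $\beta$ is the same for all $i=1,\dots,m$; (v) in every domain $e_i$ the covariates and the noise are centered, $\mathbb{E}_{e_i}[X]=0$ and $\mathbb{E}_{e_i}[N]=0$, and the system of equations in $x\in\mathbb{R}^d$ $$0\ge x^\intercal\mathrm{Cov}_{e_1}(X,X)x+2x^\intercal\mathrm{Cov}_{e_1}(X,N)=\cdots=x^\intercal\mathrm{Cov}_{e_m}(X,X)x+2x^\intercal\mathrm{Cov}_{e_m}(X,N)$$ has the unique solution $x=0$. If $\hat\beta$ is a minimal invariant-risk predictor, then $\hat\beta=\beta$.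
   Context: A linear predictor $\hat\beta$ is an invariant-risk predictor if $\mathcal{R}^{e_1}(\hat\beta)=\cdots=\mathcal{R}^{e_m}(\hat\beta)$; it is a minimal invariant-risk predictor if it is an invariant-risk predictor whose (common) risk is minimal among all invariant-risk linear predictors. $\mathrm{Cov}_{e_i}$ denotes covariance under the distribution of domain $e_i$. *)

(* Defs.v *)
From HB Require Import structures.
From mathcomp Require Import all_boot all_order all_algebra.
From mathcomp Require Import all_classical all_reals all_analysis.
Set Implicit Arguments. Unset Strict Implicit. Unset Printing Implicit Defensive.
Import Order.TTheory GRing.Theory Num.Theory.
Local Open Scope ring_scope.

Definition linpred {T : Type} {R : realType} {d : nat}
  (b : 'cV[R]_d) (X : 'I_d -> T -> R) : T -> R :=
  fun w => \sum_(j < d) b j 0 * X j w.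

Definition risk {dT : measure_display} {T : measurableType dT} {R : realType} {d : nat}
  (P : probability T R) (X : 'I_d -> T -> R) (Y : T -> R) (b : 'cV[R]_d) : \bar R :=
  'E_P[fun w => (Y w - linpred b X w) ^+ 2].

Definition covXX {dT : measure_display} {T : measurableType dT} {R : realType} {d : nat}
  (P : probability T R) (X : 'I_d -> T -> R) : 'M[R]_d :=
  \matrix_(j, k) fine (covariance P (X j) (X k)).

Definition covXN {dT : measure_display} {T : measurableType dT} {R : realType} {d : nat}
  (P : probability T R) (X : 'I_d -> T -> R) (N : T -> R) : 'cV[R]_d :=
  \col_j fine (covariance P (X j) N).

Definition qform {dT : measure_display} {T : measurableType dT} {R : realType} {d : nat}
  (P : probability T R) (X : 'I_d -> T -> R) (N : T -> R) (x : 'cV[R]_d) : R :=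
  (x^T *m covXX P X *m x) 0 0 + 2 * (x^T *m covXN P X N) 0 0.

Definition invariant_risk {dT : measure_display} {T : measurableType dT} {R : realType}
  {m d : nat} (P : 'I_m -> probability T R) (X : 'I_d -> T -> R) (Y : T -> R)
  (b : 'cV[R]_d) : Prop :=
  forall i j : 'I_m, risk (P i) X Y b = risk (P j) X Y b.

Definition minimal_invariant_risk {dT : measure_display} {T : measurableType dT}
  {R : realType} {m d : nat} (P : 'I_m -> probability T R) (X : 'I_d -> T -> R)
  (Y : T -> R) (b : 'cV[R]_d) : Prop :=
  invariant_risk P X Y b /\
  forall b' : 'cV[R]_d, invariant_risk P X Y b' ->
    forall i : 'I_m, (risk (P i) X Y b <= risk (P i) X Y b')%E.

(* Main.v *)
Require Import Defs.
From HB Require Import structures.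
From mathcomp Require Import all_boot all_order all_algebra.
From mathcomp Require Import all_classical all_reals all_analysis.
From mathcomp Require Import ring.
Import Order.TTheory GRing.Theory Num.Theory.
Local Open Scope ring_scope.


Section helpers.
Context (R : realType) (dT : measure_display) (T : measurableType dT) (P : probability T R).

Definition Ef (f : T -> R) : R := fine ('E_P[f])%E.

Lemma EfE f : f \in Lfun P 1 -> ('E_P[f])%E = (Ef f)%:E.
Proof. by move=> h; rewrite /Ef fineK // expectation_fin_num. Qed.

Lemma L1D f g : f \in Lfun P 1 -> g \in Lfun P 1 -> (fun w => f w + g w) \in Lfun P 1.
Proof. by move=> hf hg; exact: (rpredD hf hg). Qed.

Lemma L1Z k f : f \in Lfun P 1 -> (fun w => k * f w) \in Lfun P 1.
Proof.
move=> hf; have E : (fun w => k * f w) = (k \o* f)%R by apply: boolp.funext => w; rewrite /= mulrC.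
rewrite E. by apply: Lfun_scale. Qed.

Lemma EfD f g : f \in Lfun P 1 -> g \in Lfun P 1 -> Ef (fun w => f w + g w) = Ef f + Ef g.
Proof.
move=> hf hg; rewrite /Ef (expectationD hf hg).
by rewrite -fineD // expectation_fin_num.
Qed.

Lemma EfZ k f : f \in Lfun P 1 -> Ef (fun w => k * f w) = k * Ef f.
Proof.
move=> hf; have E : (fun w => k * f w) = (k \o* f)%R by apply: boolp.funext => w; rewrite /= mulrC.
rewrite /Ef E (expectationZl k hf).
by rewrite fineM // expectation_fin_num.
Qed.

Lemma Efsum n (F : 'I_n -> T -> R) : (forall j, F j \in Lfun P 1) ->
  (fun w => \sum_(j < n) F j w) \in Lfun P 1 /\
  Ef (fun w => \sum_(j < n) F j w) = \sum_(j < n) Ef (F j).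
Proof.
elim: n F => [|n IH] F hF.
  have -> : (fun w => \sum_(j < 0) F j w) = cst 0.
    by apply: boolp.funext => w; rewrite big_ord0.
  by split; [exact: Lfun_cst | rewrite big_ord0 /Ef expectation_cst].
have [h1 h2] := IH (fun j => F (widen_ord (leqnSn n) j)) (fun j => hF _).
have -> : (fun w => \sum_(j < n.+1) F j w) =
   (fun w => (fun w => \sum_(j < n) F (widen_ord (leqnSn n) j) w) w + F ord_max w).
  by apply: boolp.funext => w; rewrite big_ord_recr.
split; first exact: L1D.
by rewrite EfD // h2 big_ord_recr.
Qed.

End helpers.
Arguments Ef {R dT T} P f.
Arguments EfE {R dT T P f}.
Arguments L1D {R dT T P f g}.
Arguments L1Z {R dT T P} k {f}.
Arguments EfD {R dT T P f g}.
Arguments EfZ {R dT T P} k {f}.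
Arguments Efsum {R dT T P n} F.


Section main.
Context (R : realType) (dT : measure_display) (T : measurableType dT) (P : probability T R).
Context (d : nat) (X : 'I_d -> T -> R) (N : T -> R).
Hypothesis hN2 : N \in Lfun P 2%:E.
Hypothesis hX2 : forall j, X j \in Lfun P 2%:E.
Hypothesis hXc : forall j, ('E_P[X j] = 0)%E.
Hypothesis hNc : ('E_P[N] = 0)%E.

Let Pfin : P setT \is a fin_num := fin_num_measure P _ measurableT.
Let L1of f : f \in Lfun P 2%:E -> f \in Lfun P 1 := @Lfun_subset12 _ _ _ P Pfin f.

Lemma L1XX j k : (fun w => X j w * X k w) \in Lfun P 1.
Proof. exact: (Lfun2_mul_Lfun1 (hX2 j) (hX2 k)). Qed.
Lemma L1XN j : (fun w => X j w * N w) \in Lfun P 1.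
Proof. exact: (Lfun2_mul_Lfun1 (hX2 j) hN2). Qed.
Lemma L1NN : (fun w => N w ^+ 2) \in Lfun P 1.
Proof. have := Lfun2_mul_Lfun1 hN2 hN2. by apply: eq_ind. Qed.

Lemma covXX_E j k : covXX P X j k = Ef P (fun w => X j w * X k w).
Proof.
rewrite /covXX mxE covarianceE; first last.
- exact: L1XX.
- exact: L1of.
- exact: L1of.
by rewrite !hXc mule0 sube0.
Qed.

Lemma covXN_E j : covXN P X N j 0 = Ef P (fun w => X j w * N w).
Proof.
rewrite /covXN mxE covarianceE; first last.
- exact: L1XN.
- exact: L1of.
- exact: L1of.
by rewrite hNc mule0 sube0.
Qed.


Lemma risk_expand (beta b : 'cV[R]_d) (Y : T -> R) :
  Y = (fun w => linpred beta X w + N w) ->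
  risk P X Y b = (qform P X N (beta - b) + Ef P (fun w => N w ^+ 2))%:E.
Proof.
move=> hY; set x := beta - b.
pose FA j := fun w => \sum_(k < d) x j 0 * x k 0 * (X j w * X k w).
pose FB j := fun w => x j 0 * (X j w * N w).
have eqZ : (fun w => (Y w - linpred b X w) ^+ 2) =
  (fun w => (fun w => \sum_(j < d) FA j w) w +
     (fun w => (fun w => 2 * (fun w => \sum_(j < d) FB j w) w) w + N w ^+ 2) w).
  apply: boolp.funext => w; rewrite hY /linpred /FA /FB.
  have -> : \sum_(j < d) beta j 0 * X j w + N w - \sum_(j < d) b j 0 * X j w
     = \sum_(j < d) x j 0 * X j w + N w.
    rewrite addrAC -sumrB; congr (_ + _); apply: eq_bigr => j _.
    by rewrite /x !mxE mulrBl.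
  rewrite sqrrD -addrA; congr (_ + (_ + _)).
    rewrite expr2 big_distrl /=; apply: eq_bigr => j _.
    rewrite big_distrr /=; apply: eq_bigr => k _; ring.
  rewrite -mulr_natl; congr (_ * _).
  rewrite big_distrl /=; apply: eq_bigr => j _; ring.
have hFA : forall j, FA j \in Lfun P 1 /\ Ef P (FA j) =
   \sum_(k < d) x j 0 * x k 0 * Ef P (fun w => X j w * X k w).
  move=> j; have [h1 h2] := Efsum (fun k w => x j 0 * x k 0 * (X j w * X k w))
    (fun k => L1Z _ (L1XX j k)).
  split; first exact: h1.
  rewrite /FA h2; apply: eq_bigr => k _; exact: EfZ (L1XX j k).
have hFB : forall j, FB j \in Lfun P 1 /\ Ef P (FB j) = x j 0 * Ef P (fun w => X j w * N w).
  by move=> j; split; [exact: L1Z (L1XN j) | exact: EfZ (L1XN j)].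
have [hA1 hA2] := Efsum FA (fun j => (hFA j).1).
have [hB1 hB2] := Efsum FB (fun j => (hFB j).1).
have hB1' := L1Z 2 hB1.
rewrite /risk eqZ EfE; last by apply: L1D => //; apply: L1D => //; exact: L1NN.
congr (_%:E).
rewrite EfD //; last by apply: L1D => //; exact: L1NN.
rewrite EfD //; last exact: L1NN.
rewrite EfZ // hA2 hB2 addrA; congr (_ + _ + _).
- rewrite /qform mxE; under eq_bigr => j _ do rewrite (hFA j).2.
  rewrite exchange_big /=; apply: eq_bigr => k _.
  rewrite !mxE big_distrl /=; apply: eq_bigr => j _.
  have := covXX_E j k; rewrite mxE => ->; rewrite !mxE; ring.
- rewrite mxE; congr (_ * _); apply: eq_bigr => j _.
  by have := covXN_E j; rewrite mxE => ->; rewrite (hFB j).2 !mxE.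
Qed.

End main.


Lemma qform0 (R : realType) (dT : measure_display) (T : measurableType dT) (d : nat)
  (P : probability T R) (X : 'I_d -> T -> R) (N : T -> R) : qform P X N 0 = 0.
Proof. by rewrite /qform trmx0 !mul0mx mxE mulr0 addr0. Qed.

Theorem theorem4p3 (R : realType) (dT : measure_display) (T : measurableType dT)
  (m d : nat) (P : 'I_m -> probability T R)
  (X : 'I_d -> T -> R) (N Y : T -> R) (beta bhat : 'cV[R]_d)
  (* (i) linear SEM; noise (and covariates) with finite second moments *)
  (hY : Y = fun w => linpred beta X w + N w)
  (hN2 : forall i, N \in Lfun (P i) 2%:E)
  (hX2 : forall i j, X j \in Lfun (P i) 2%:E)
  (* (iv) the causal predictor has the same risk in all domains *)
  (hcausal : forall i j, risk (P i) X Y beta = risk (P j) X Y beta)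
  (* (v) centering *)
  (hXc : forall i j, ('E_(P i)[X j] = 0)%E)
  (hNc : forall i, ('E_(P i)[N] = 0)%E)
  (* (v) the system 0 >= q_1(x) = ... = q_m(x) has the unique solution x = 0 *)
  (huniq : forall x : 'cV[R]_d,
     (forall i, qform (P i) X N x <= 0) ->
     (forall i j, qform (P i) X N x = qform (P j) X N x) -> x = 0)
  (hmin : minimal_invariant_risk P X Y bhat) :
  bhat = beta.
Proof.
have E i (b : 'cV[R]_d) := @risk_expand _ _ _ _ _ _ _ (hN2 i) (hX2 i) (hXc i) (hNc i) beta b Y hY.
have hc i j : Ef (P i) (fun w => N w ^+ 2) = Ef (P j) (fun w => N w ^+ 2).
  have := hcausal i j; rewrite !E subrr !qform0 !add0r.
  by move=> [].
case: hmin => hinv hle.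
have h0 : beta - bhat = 0.
  apply: huniq.
    move=> i; have := hle beta hcausal i.
    by rewrite !E subrr qform0 add0r lee_fin gerDr.
  move=> i j; have := hinv i j; rewrite !E (hc i j) => -[].
  by move/addIr.
by apply/esym/eqP; rewrite -subr_eq0 h0.
Qed.
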